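(* Let $Y$ be a locally compact sober space, let $\mu\colon Y\to[0,1]$ be such that $\mu^{-1}([0,a))$ is open in $Y$ for every $a\in[0,1]$, and let $X=\mu^{-1}(\{0\})$ with the subspace topology. For a non-empty compact saturated $Q\subseteq Y$ let $r(Q)=\max\{\mu(y)\mid y\in Q\}$ (which exists). Then: (a) for every filtered family $(Q_i)_{i\in I}$ of non-empty compact saturated subsets of $Y$ with $\inf_{i\in I} r(Q_i)=0$, the intersection $\bigcap_{i\in I}Q_i$ is a non-empty compact saturated subset of $X$; (b) conversely, every non-empty compact saturated subset $Q$ of $X$ is of the form $Q=\bigcap_{i\in I}Q_i=\bigcap_{i\in I}\mathrm{int}(Q_i)$ for some filtered family $(Q_i)_{i\in I}$ of non-empty compact saturated subsets of $Y$ with $\inf_{i\in I}r(Q_i)=0$, where $\mathrm{int}$ denotes interior in $Y$; and when $Y$ is a continuous dcpo with its Scott topology, the $Q_i$ can be chosen of the form ${\uparrow}A_i$ with $A_i$ a non-empty finite subset of $Y$.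
   Context: Compactness does not presuppose separation; a saturated set is one that is upward closed in the specialization preorder. A family is filtered if any two members contain a third member. ${\uparrow}A$ is the upward closure of $A$. Every LCS-complete space (a $G_\delta$ subset of a locally compact sober space) arises as such an $X$ for suitable $Y,\mu$. *)

(* Defs.v *)
From Stdlib Require Import Reals List Classical ClassicalEpsilon.
Open Scope R_scope.

Section Topology.
Context {A : Type}.

Definition is_topology (O : (A -> Prop) -> Prop) : Prop :=
  O (fun _ => True) /\
  (forall U V, O U -> O V -> O (fun x => U x /\ V x)) /\
  (forall F : (A -> Prop) -> Prop, (forall U, F U -> O U) ->
     O (fun x => exists U, F U /\ U x)).

Definition subset (P Q : A -> Prop) : Prop := forall x, P x -> Q x.

Definition tclosed (O : (A -> Prop) -> Prop) (C : A -> Prop) : Prop :=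
  O (fun x => ~ C x).

Definition tclosure (O : (A -> Prop) -> Prop) (S : A -> Prop) (y : A) : Prop :=
  forall C, tclosed O C -> subset S C -> C y.

Definition tinterior (O : (A -> Prop) -> Prop) (S : A -> Prop) (y : A) : Prop :=
  exists U, O U /\ subset U S /\ U y.

Definition spec_le (O : (A -> Prop) -> Prop) (x y : A) : Prop :=
  forall U, O U -> U x -> U y.

Definition saturated (O : (A -> Prop) -> Prop) (Q : A -> Prop) : Prop :=
  forall x y, Q x -> spec_le O x y -> Q y.

Definition compactset (O : (A -> Prop) -> Prop) (Q : A -> Prop) : Prop :=
  forall F : (A -> Prop) -> Prop, (forall U, F U -> O U) ->
    (forall x, Q x -> exists U, F U /\ U x) ->
    exists l : list (A -> Prop), (forall U, In U l -> F U) /\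
      (forall x, Q x -> exists U, In U l /\ U x).

Definition nonempty (Q : A -> Prop) : Prop := exists x, Q x.

Definition irreducible_closed (O : (A -> Prop) -> Prop) (C : A -> Prop) : Prop :=
  tclosed O C /\ nonempty C /\
  forall C1 C2, tclosed O C1 -> tclosed O C2 ->
    (forall y, C y -> C1 y \/ C2 y) -> subset C C1 \/ subset C C2.

Definition sober (O : (A -> Prop) -> Prop) : Prop :=
  forall C, irreducible_closed O C ->
    exists! x, forall y, C y <-> tclosure O (fun z => z = x) y.

Definition locally_compact (O : (A -> Prop) -> Prop) : Prop :=
  forall x U, O U -> U x ->
    exists V Q, O V /\ V x /\ subset V Q /\ subset Q U /\ compactset O Q.

Definition directed (le : A -> A -> Prop) (D : A -> Prop) : Prop :=
  nonempty D /\ forall x y, D x -> D y -> exists z, D z /\ le x z /\ le y z.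

Definition is_sup (le : A -> A -> Prop) (D : A -> Prop) (s : A) : Prop :=
  (forall d, D d -> le d s) /\ (forall u, (forall d, D d -> le d u) -> le s u).

Definition is_dcpo (le : A -> A -> Prop) : Prop :=
  (forall x, le x x) /\ (forall x y z, le x y -> le y z -> le x z) /\
  (forall x y, le x y -> le y x -> x = y) /\
  (forall D, directed le D -> exists s, is_sup le D s).

Definition way_below (le : A -> A -> Prop) (x y : A) : Prop :=
  forall D s, directed le D -> is_sup le D s -> le y s -> exists d, D d /\ le x d.

Definition continuous_dcpo (le : A -> A -> Prop) : Prop :=
  is_dcpo le /\
  forall y, directed le (fun x => way_below le x y) /\
            is_sup le (fun x => way_below le x y) y.

Definition scott_open (le : A -> A -> Prop) (U : A -> Prop) : Prop :=
  (forall x y, U x -> le x y -> U y) /\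
  (forall D s, directed le D -> is_sup le D s -> U s -> exists d, D d /\ U d).

Definition upset (le : A -> A -> Prop) (l : list A) (y : A) : Prop :=
  exists a, In a l /\ le a y.

End Topology.

Definition subspace_top {A : Type} (O : (A -> Prop) -> Prop) (P : A -> Prop)
  : ({y : A | P y} -> Prop) -> Prop :=
  fun W => exists U, O U /\ forall x, W x <-> U (proj1_sig x).

Definition filtered {I A : Type} (Q : I -> A -> Prop) : Prop :=
  inhabited I /\ forall i j, exists k, subset (Q k) (Q i) /\ subset (Q k) (Q j).

Definition is_max_on {A : Type} (mu : A -> R) (Q : A -> Prop) (m : R) : Prop :=
  (exists y, Q y /\ mu y = m) /\ (forall y, Q y -> mu y <= m).

(* r(Q) = max { mu y | y in Q } (chosen by Hilbert's epsilon; meaningful when it exists) *)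
Definition rmax {A : Type} (mu : A -> R) (Q : A -> Prop) : R :=
  epsilon (inhabits 0) (is_max_on mu Q).

Definition is_inf_fam {I : Type} (f : I -> R) (m : R) : Prop :=
  (forall i, m <= f i) /\ (forall e, e > 0 -> exists i, f i < m + e).

(* Main.v *)
Require Import Defs.
From Stdlib Require Import Reals List Classical ClassicalEpsilon Lra.
Open Scope R_scope.
Module ZH.
From mathcomp Require Import all_boot boolp classical_sets.
Lemma my_zorn (T : Type) (P : (T->Prop)->Prop) :
  (forall F : (T->Prop)->Prop, (forall X, F X -> P X) ->
     (forall X Y, F X -> F Y -> (forall t, X t -> Y t) \/ (forall t, Y t -> X t)) ->
     P (fun t => exists X, F X /\ X t)) ->
  exists A, P A /\ forall B, P B -> (forall t, A t -> B t) -> forall t, B t -> A t.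
Proof.
move=> H.
case: (@Zorn_bigcup T P).
  move=> F FP Ftot.
  match goal with |- P ?U => have -> : U = (fun t => exists X, F X /\ X t) end.
    apply/funext=> t; apply/propext; split.
      by case=> X FX Xt; exists X.
    by case=> X [FX Xt]; exists X.
  apply: H.
    by move=> X FX; apply: FP.
  move=> X Y FX FY; case: (Ftot X Y FX FY) => h; [left|right]; move=> t; exact: h.
move=> A [PA Amax].
exists A; split=> // B PB AB t Bt.
apply: contrapT => nAt.
apply: (Amax B) => //; split; first by move=> x; apply: AB.
by move=> BA; apply: nAt; apply: BA.
Qed.
End ZH.
From Stdlib Require Import FunctionalExtensionality PropExtensionality.

Lemma list_choice {A B : Type} (R : A -> B -> Prop) (l : list A) :
  (forall a, In a l -> exists b, R a b) ->
  exists l' : list B, (forall b, In b l' -> exists a, In a l /\ R a b) /\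
                      (forall a, In a l -> exists b, In b l' /\ R a b).
Proof.
  induction l as [|a l IH]; intros H.
  - exists nil. split; intros ? [].
  - destruct (H a (or_introl eq_refl)) as [b Hb].
    destruct IH as [l' [H1 H2]].
    { intros a' Ha'. apply H. right. exact Ha'. }
    exists (b :: l'). split.
    + intros b' [<-|Hb'].
      * exists a. split; [left; reflexivity|exact Hb].
      * destruct (H1 b' Hb') as [a' [Ha' R']]. exists a'. split; [right; exact Ha'|exact R'].
    + intros a' [<-|Ha'].
      * exists b. split; [left; reflexivity|exact Hb].
      * destruct (H2 a' Ha') as [b' [Hb' R']]. exists b'. split; [right; exact Hb'|exact R'].
Qed.

Section Gen.
Context {Y : Type} (OY : (Y -> Prop) -> Prop) (Ht : is_topology OY).

Lemma open_ext U V : OY U -> (forall x, U x <-> V x) -> OY V.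
Proof.
  intros HU H. replace V with U; [exact HU|].
  apply functional_extensionality. intros x. apply propositional_extensionality. apply H.
Qed.

Lemma open_union (F : (Y -> Prop) -> Prop) :
  (forall U, F U -> OY U) -> OY (fun x => exists U, F U /\ U x).
Proof. destruct Ht as [_ [_ H]]. apply H. Qed.

Lemma open_inter U V : OY U -> OY V -> OY (fun x => U x /\ V x).
Proof. destruct Ht as [_ [H _]]. apply H. Qed.

Lemma open_true : OY (fun _ => True).
Proof. destruct Ht as [H _]. exact H. Qed.

Lemma open_empty : OY (fun _ => False).
Proof.
  apply (open_ext (fun x => exists U, (fun _ : Y -> Prop => False) U /\ U x)).
  - apply open_union. intros U [].
  - intros x. split; [intros [U [[] _]]|intros []].
Qed.

Lemma open_union2 U V : OY U -> OY V -> OY (fun x => U x \/ V x).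
Proof.
  intros HU HV.
  apply (open_ext (fun x => exists W, (W = U \/ W = V) /\ W x)).
  - apply open_union. intros W [->| ->]; assumption.
  - intros x. split.
    + intros [W [[->| ->] Hx]]; [left|right]; exact Hx.
    + intros [Hx|Hx]; [exists U|exists V]; split; auto.
Qed.

Lemma open_interior K : OY (tinterior OY K).
Proof.
  apply (open_ext (fun x => exists U, (OY U /\ subset U K) /\ U x)).
  - apply open_union. intros U [H _]. exact H.
  - intros x. unfold tinterior. split.
    + intros [U [[H1 H2] H3]]. exists U. auto.
    + intros [U [H1 [H2 H3]]]. exists U. auto.
Qed.

Lemma interior_sub K y : tinterior OY K y -> K y.
Proof. intros [U [_ [H1 H2]]]. apply H1, H2. Qed.

Lemma spec_trans x y z : spec_le OY x y -> spec_le OY y z -> spec_le OY x z.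
Proof. intros H1 H2 U HU Hx. apply (H2 U HU). apply (H1 U HU Hx). Qed.

Lemma compact_up K : compactset OY K ->
  compactset OY (fun y => exists x, K x /\ spec_le OY x y).
Proof.
  intros HK F HF Hc.
  destruct (HK F HF) as [l [H1 H2]].
  { intros x Kx. apply Hc. exists x. split; [exact Kx|intros U _ H; exact H]. }
  exists l. split; [exact H1|].
  intros y [x [Kx Hxy]]. destruct (H2 x Kx) as [U [HU Ux]].
  exists U. split; [exact HU|]. apply Hxy; [apply HF, H1, HU|exact Ux].
Qed.

Lemma compact_union_list (lK : list (Y -> Prop)) :
  (forall K, In K lK -> compactset OY K) ->
  compactset OY (fun y => exists K, In K lK /\ K y).
Proof.
  induction lK as [|K lK IH]; intros H F HF Hc.
  - exists nil. split; [intros ? []|intros x [K [[] _]]].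
  - destruct (H K (or_introl eq_refl) F HF) as [l1 [A1 B1]].
    { intros x Kx. apply Hc. exists K. split; [left; reflexivity|exact Kx]. }
    destruct (IH (fun K' H' => H K' (or_intror H')) F HF) as [l2 [A2 B2]].
    { intros x [K' [HK' Kx]]. apply Hc. exists K'. split; [right; exact HK'|exact Kx]. }
    exists (l1 ++ l2). split.
    + intros U HU. apply in_app_or in HU. destruct HU; auto.
    + intros x [K' [[<-|HK'] Kx]].
      * destruct (B1 x Kx) as [U [HU Ux]]. exists U. split; [apply in_or_app; left; exact HU|exact Ux].
      * destruct (B2 x (ex_intro _ K' (conj HK' Kx))) as [U [HU Ux]].
        exists U. split; [apply in_or_app; right; exact HU|exact Ux].
Qed.

End Gen.

Section WF.
Context {Y : Type} (OY : (Y -> Prop) -> Prop) (Ht : is_topology OY) (Hsob : sober OY).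

Lemma chain_bound (U : Y -> Prop) (F : (Y -> Prop) -> Prop)
  (Ftot : forall X Z, F X -> F Z -> (forall t, X t -> Z t) \/ (forall t, Z t -> X t))
  (l : list (Y -> Prop)) :
  (forall W, In W l -> W = U \/ F W) ->
  exists V0, (F V0 \/ forall t, ~ V0 t) /\
    forall W, In W l -> forall t, W t -> U t \/ V0 t.
Proof.
  induction l as [|W l IH]; intros H.
  - exists (fun _ => False). split; [right; auto|intros ? []].
  - destruct IH as [V0 [HV0 H0]].
    { intros W' HW'. apply H. right. exact HW'. }
    destruct (H W (or_introl Logic.eq_refl)) as [->|FW].
    + exists V0. split; [exact HV0|]. intros W' [<-|HW'] t Ht'.
      * left; exact Ht'.
      * apply (H0 W' HW' t Ht').
    + destruct HV0 as [FV0|E0].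
      * destruct (Ftot W V0 FW FV0) as [S1|S1].
        -- exists V0. split; [left; exact FV0|]. intros W' [<-|HW'] t Ht'.
           ++ right. apply S1, Ht'.
           ++ apply (H0 W' HW' t Ht').
        -- exists W. split; [left; exact FW|]. intros W' [<-|HW'] t Ht'.
           ++ right. exact Ht'.
           ++ destruct (H0 W' HW' t Ht') as [A|A]; [left; exact A|right; apply S1, A].
      * exists W. split; [left; exact FW|]. intros W' [<-|HW'] t Ht'.
        -- right. exact Ht'.
        -- destruct (H0 W' HW' t Ht') as [A|A]; [left; exact A|destruct (E0 t A)].
Qed.

Lemma well_filtered (I : Type) (Q : I -> Y -> Prop) :
  filtered Q -> (forall i, compactset OY (Q i) /\ saturated OY (Q i)) ->
  forall U, OY U -> (forall y, (forall i, Q i y) -> U y) ->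
  exists i, subset (Q i) U.
Proof.
  intros [[i0] Hfil] HQ U HU Hsub.
  apply NNPP. intros Hno.
  assert (Hn : forall i, ~ subset (Q i) U).
  { intros i Hi. apply Hno. exists i. exact Hi. }
  set (P := fun V => OY V /\ forall i, ~ subset (Q i) (fun y => U y \/ V y)).
  destruct (ZH.my_zorn Y P) as [A [[HA PA] Amax]].
  - intros F FP Ftot. split.
    + apply open_union; auto. intros V FV. apply (FP V FV).
    + intros i Hi.
      destruct (proj1 (HQ i) (fun W => W = U \/ F W)) as [l [Hl1 Hl2]].
      { intros W [->|FW]; [exact HU|apply (FP W FW)]. }
      { intros x Qx. destruct (Hi x Qx) as [Ux|[V [FV Vx]]].
        - exists U. auto.
        - exists V. auto. }
      destruct (chain_bound U F Ftot l Hl1) as [V0 [HV0 HV0l]].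
      destruct HV0 as [FV0|E0].
      * apply (proj2 (FP V0 FV0) i). intros x Qx.
        destruct (Hl2 x Qx) as [W [HW Wx]]. apply (HV0l W HW x Wx).
      * apply (Hn i). intros x Qx.
        destruct (Hl2 x Qx) as [W [HW Wx]].
        destruct (HV0l W HW x Wx) as [A|A]; [exact A|destruct (E0 x A)].
  - assert (UA : forall t, U t -> A t).
    { intros t0 Ut0. apply (Amax (fun t => U t \/ A t)).
      - split.
        + apply open_union2; auto.
        + intros i Hi. apply (PA i). intros x Qx. destruct (Hi x Qx) as [H|[H|H]]; auto.
      - intros t At; right; exact At. 
      - left; exact Ut0. }
    set (C := fun t => ~ A t).
    assert (Cirr : irreducible_closed OY C).
    { split; [|split].
      - unfold tclosed. apply (open_ext OY A); auto.
        intros x. unfold C. split; [intros H1 H2; auto|intros H1; apply NNPP; exact H1].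
      - destruct (not_all_ex_not _ _ (PA i0)) as [y Hy].
        apply imply_to_and in Hy. destruct Hy as [Qy Hy].
        exists y. intros Ay. apply Hy. right. exact Ay.
      - intros C1 C2 HC1 HC2 Hcov.
        apply NNPP. intros Hn2. apply not_or_and in Hn2. destruct Hn2 as [N1 N2].
        assert (Key : forall C', tclosed OY C' -> ~ subset C C' ->
                  exists i, subset (Q i) (fun y => U y \/ A y \/ ~ C' y)).
        { intros C' HC' N'.
          apply NNPP. intros Hno'.
          assert (PB : P (fun t => A t \/ ~ C' t)).
          { split.
            - apply open_union2; auto.
            - intros i Hi. apply Hno'. exists i. intros x Qx.
              destruct (Hi x Qx) as [H|H]; [left; exact H|right; exact H]. }
          apply N'. intros y Cy. apply NNPP. intros nC'.
          apply Cy. apply (Amax _ PB); [intros t At; left; exact At|right; exact nC']. }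
        destruct (Key C1 HC1 N1) as [i Hi].
        destruct (Key C2 HC2 N2) as [j Hj].
        destruct (Hfil i j) as [k [Hki Hkj]].
        apply (PA k). intros x Qx.
        destruct (Hi x (Hki x Qx)) as [H|[H|H]]; [left; exact H|right; exact H|].
        destruct (Hj x (Hkj x Qx)) as [H'|[H'|H']]; [left; exact H'|right; exact H'|].
        right. apply NNPP. intros nA. destruct (Hcov x nA); contradiction. }
    destruct (Hsob C Cirr) as [x [Hx _]].
    assert (Cx : C x).
    { apply (proj2 (Hx x)). intros C0 _ HS. apply HS. reflexivity. }
    apply Cx. apply UA. apply Hsub. intros i.
    destruct (not_all_ex_not _ _ (PA i)) as [z Hz].
    apply imply_to_and in Hz. destruct Hz as [Qz Hz].
    assert (Cz : C z). { intros Az. apply Hz. right. exact Az. }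
    apply (proj2 (HQ i) z x Qz).
    intros W HW Wz. apply NNPP. intros nWx.
    assert (Hcl := proj1 (Hx z) Cz (fun t => ~ W t)).
    apply Hcl; [|intros t -> ; exact nWx|exact Wz].
    unfold tclosed. apply (open_ext OY W); auto.
    intros t. split; [intros H1 H2; auto|intros H1; apply NNPP; exact H1].
Qed.
End WF.

Section MU.
Context {Y : Type} (OY : (Y -> Prop) -> Prop) (Ht : is_topology OY)
  (mu : Y -> R) (Hmu01 : forall y, 0 <= mu y <= 1)
  (Hmuopen : forall a, 0 <= a <= 1 -> OY (fun y => mu y < a)).

Lemma mu_open a : OY (fun y => mu y < a).
Proof.
  destruct (Rle_lt_dec a 0) as [Ha|Ha].
  - apply (open_ext OY (fun _ => False)); [apply open_empty; auto|].
    intros y. split; [intros []|]. intros H. specialize (Hmu01 y). lra.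
  - destruct (Rle_lt_dec a 1) as [Hb|Hb].
    + apply Hmuopen. lra.
    + apply (open_ext OY (fun _ => True)); [apply open_true; auto|].
      intros y. split; [|auto]. intros _. specialize (Hmu01 y). lra.
Qed.

Lemma bound_list (m : R) (l : list (Y -> Prop)) :
  (forall W, In W l -> exists a, a < m /\ W = (fun y => mu y < a)) ->
  exists b, b < m /\ forall W, In W l -> forall y, W y -> mu y < b.
Proof.
  induction l as [|W l IH]; intros H.
  - exists (m - 1). split; [lra|intros ? []].
  - destruct IH as [b [Hb Hl]]. { intros W' HW'. apply H. right. exact HW'. }
    destruct (H W (or_introl Logic.eq_refl)) as [a [Ha ->]].
    exists (Rmax a b). split; [apply Rmax_lub_lt; auto|].
    intros W' [<-|HW'] y Hy.
    + eapply Rlt_le_trans; [exact Hy|apply Rmax_l].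
    + eapply Rlt_le_trans; [apply (Hl W' HW' y Hy)|apply Rmax_r].
Qed.

Lemma max_exists Q : nonempty Q -> compactset OY Q -> exists m, is_max_on mu Q m.
Proof.
  intros [y0 Qy0] HQ.
  set (E := fun r => exists y, Q y /\ r = mu y).
  destruct (completeness E) as [m [Hub Hlub]].
  { exists 1. intros r [y [_ ->]]. apply Hmu01. }
  { exists (mu y0). exists y0. auto. }
  exists m. split.
  - apply NNPP. intros Hno.
    assert (Hlt : forall y, Q y -> mu y < m).
    { intros y Qy. destruct (Rle_lt_or_eq_dec (mu y) m) as [H|H].
      - apply Hub. exists y. auto.
      - exact H.
      - exfalso. apply Hno. exists y. auto. }
    destruct (HQ (fun W => exists a, a < m /\ W = (fun y => mu y < a))) as [l [Hl1 Hl2]].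
    { intros W [a [_ ->]]. apply mu_open. }
    { intros x Qx. exists (fun y => mu y < (mu x + m) / 2). split.
      - exists ((mu x + m)/2). split; [specialize (Hlt x Qx); lra|reflexivity].
      - simpl. specialize (Hlt x Qx). lra. }
    destruct (bound_list m l Hl1) as [b [Hb Hbl]].
    assert (m <= b).
    { apply Hlub. intros r [y [Qy ->]]. destruct (Hl2 y Qy) as [W [HW Wy]].
      left. apply (Hbl W HW y Wy). }
    lra.
  - intros y Qy. apply Hub. exists y. auto.
Qed.

Lemma rmax_spec Q : nonempty Q -> compactset OY Q -> is_max_on mu Q (rmax mu Q).
Proof.
  intros H1 H2. unfold rmax. apply epsilon_spec. apply max_exists; auto.
Qed.

Lemma gen_b (I : Type) (Qi : I -> Y -> Prop) (S : Y -> Prop) :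
  (forall i, nonempty (Qi i) /\ compactset OY (Qi i) /\ saturated OY (Qi i)) ->
  (forall i, subset S (tinterior OY (Qi i))) ->
  (forall U, OY U -> subset S U -> exists i, subset (Qi i) U) ->
  saturated OY S -> (forall y, S y -> mu y = 0) ->
  filtered Qi /\ is_inf_fam (fun i => rmax mu (Qi i)) 0 /\
  (forall y, (forall i, Qi i y) <-> S y) /\
  (forall y, (forall i, tinterior OY (Qi i) y) <-> S y).
Proof.
  intros HQ Hint Hb Hsat Hmu0.
  assert (Hcap : forall y, (forall i, Qi i y) -> S y).
  { intros y Hy. apply NNPP. intros nS.
    destruct (Hb (fun x => exists V, (OY V /\ ~ V y) /\ V x)) as [i Hi].
    - apply open_union; auto. intros V [H _]. exact H.
    - intros x Sx. apply NNPP. intros Hno.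
      apply nS. apply (Hsat x y Sx). intros V HV Vx. apply NNPP. intros nVy.
      apply Hno. exists V. auto.
    - destruct (Hi y (Hy i)) as [V [[_ nV] Vy]]. contradiction. }
  split; [|split; [|split]].
  - split.
    + destruct (Hb (fun _ => True)) as [i _]; [apply open_true; auto|intros ? ?; exact Logic.I|].
      constructor. exact i.
    + intros i j.
      destruct (Hb (fun x => tinterior OY (Qi i) x /\ tinterior OY (Qi j) x)) as [k Hk].
      * apply open_inter; auto; apply open_interior; auto.
      * intros x Sx. split; apply Hint; auto.
      * exists k. split; intros x Hx; apply (interior_sub OY); apply (Hk x Hx).
  - split.
    + intros i. destruct (rmax_spec (Qi i)) as [[y [_ <-]] _]; try apply HQ.
      apply Hmu01.
    + intros e He.
      destruct (Hb (fun y => mu y < e)) as [i Hi].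
      * apply mu_open.
      * intros x Sx. rewrite (Hmu0 x Sx). lra.
      * exists i. destruct (rmax_spec (Qi i)) as [[y [Qy <-]] _]; try apply HQ.
        specialize (Hi y Qy). simpl in Hi. lra.
  - intros y. split; [apply Hcap|]. intros Sy i. apply (interior_sub OY). apply Hint, Sy.
  - intros y. split.
    + intros H. apply Hcap. intros i. apply (interior_sub OY). apply H.
    + intros Sy i. apply Hint, Sy.
Qed.
End MU.

Section DC.
Context {Y : Type} (OY : (Y -> Prop) -> Prop) (le : Y -> Y -> Prop)
  (Hcd : continuous_dcpo le) (Hsc : forall U, OY U <-> scott_open le U).

Let refl : forall x, le x x.
Proof. destruct Hcd as [[H _] _]. exact H. Qed.
Let trans : forall x y z, le x y -> le y z -> le x z.
Proof. destruct Hcd as [[_ [H _]] _]. exact H. Qed.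

Lemma wb_le a y : way_below le a y -> le a y.
Proof.
  intros H. destruct (H (fun z => z = y) y) as [d [-> Hd]].
  - split; [exists y; reflexivity|]. intros x z -> ->. exists y. auto.
  - split; [intros d ->; apply refl|intros u Hu; apply Hu; reflexivity].
  - apply refl.
  - exact Hd.
Qed.

Lemma wb_mono_r a b c : way_below le a b -> le b c -> way_below le a c.
Proof. intros H Hbc D s HD Hs Hcs. apply (H D s HD Hs). eapply trans; eauto. Qed.

Lemma wb_mono_l a b c : le a b -> way_below le b c -> way_below le a c.
Proof.
  intros Hab H D s HD Hs Hcs. destruct (H D s HD Hs Hcs) as [d [Dd Hd]].
  exists d. split; [exact Dd|eapply trans; eauto].
Qed.

Lemma scott_up U x y : OY U -> U x -> le x y -> U y.
Proof. intros HU Ux Hxy. apply (proj1 (proj1 (Hsc U) HU) x y Ux Hxy). Qed.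

Lemma spec_le_le x y : spec_le OY x y -> le x y.
Proof.
  intros H. apply NNPP. intros Hn.
  assert (Ho : OY (fun z => ~ le z y)).
  { apply Hsc. split.
    - intros a b Ha Hab Hb. apply Ha. eapply trans; eauto.
    - intros D s HD Hs Hns. apply NNPP. intros Hno. apply Hns.
      apply (proj2 Hs). intros d Dd. apply NNPP. intros Hd. apply Hno. exists d. auto. }
  apply (H _ Ho Hn). apply refl.
Qed.

Lemma wb_open a : OY (fun y => way_below le a y).
Proof.
  apply Hsc. split.
  - intros x y Hx Hxy. eapply wb_mono_r; eauto.
  - intros D s HD Hs Has.
    set (D' := fun w => exists d, D d /\ way_below le w d).
    assert (HD' : directed le D').
    { split.
      - destruct HD as [[d0 Dd0] _]. destruct (proj2 Hcd d0) as [[[w Hw] _] _].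
        exists w. exists d0. auto.
      - intros w1 w2 [d1 [D1 H1]] [d2 [D2 H2]].
        destruct (proj2 HD d1 d2 D1 D2) as [d3 [D3 [L1 L2]]].
        destruct (proj2 Hcd d3) as [[_ Hdir] _].
        destruct (Hdir w1 w2 (wb_mono_r _ _ _ H1 L1) (wb_mono_r _ _ _ H2 L2)) as [w3 [W3 [M1 M2]]].
        exists w3. split; [exists d3; auto|auto]. }
    assert (Hs' : is_sup le D' s).
    { split.
      - intros w [d [Dd Hw]]. eapply trans; [apply wb_le, Hw|apply (proj1 Hs), Dd].
      - intros u Hu. apply (proj2 Hs). intros d Dd.
        apply (proj2 (proj2 (proj2 Hcd d))). intros w Hw. apply Hu. exists d. auto. }
    destruct (Has D' s HD' Hs' (refl s)) as [w [[d [Dd Hwd]] Haw]].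
    exists d. split; [exact Dd|]. eapply wb_mono_l; eauto.
Qed.

Lemma approx U x : OY U -> U x -> exists a, way_below le a x /\ U a.
Proof.
  intros HU Ux. destruct (proj2 Hcd x) as [Hdir Hsup].
  destruct (proj2 (proj1 (Hsc U) HU) _ x Hdir Hsup Ux) as [a [Ha Ua]].
  exists a. auto.
Qed.

Lemma upset_compact A : compactset OY (upset le A).
Proof.
  intros F HF Hc.
  destruct (list_choice (fun a U => F U /\ U a) A) as [l [H1 H2]].
  { intros a Ha. apply (Hc a). exists a. split; [exact Ha|apply refl]. }
  exists l. split.
  - intros U HU. destruct (H1 U HU) as [a [_ [FU _]]]. exact FU.
  - intros y [a [Ha Hay]]. destruct (H2 a Ha) as [U [HU [FU Ua]]].
    exists U. split; [exact HU|]. apply (scott_up U a y); auto.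
Qed.

Lemma upset_sat A : saturated OY (upset le A).
Proof.
  intros x y [a [Ha Hax]] Hxy. exists a. split; [exact Ha|].
  eapply trans; [exact Hax|apply spec_le_le, Hxy].
Qed.

Lemma upset_nonempty A : A <> nil -> nonempty (upset le A).
Proof.
  destruct A as [|a A]; [intros H; contradiction H; reflexivity|].
  intros _. exists a. exists a. split; [left; reflexivity|apply refl].
Qed.

Lemma dcpo_builder (S : Y -> Prop) : compactset OY S -> nonempty S ->
  forall U, OY U -> subset S U ->
  exists A, A <> nil /\ subset S (tinterior OY (upset le A)) /\ subset (upset le A) U.
Proof.
  intros HS [s0 Ss0] U HU HSU.
  destruct (HS (fun W => exists a, U a /\ W = (fun y => way_below le a y))) as [l [Hl1 Hl2]].
  { intros W [a [_ ->]]. apply wb_open. }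
  { intros x Sx. destruct (approx U x HU (HSU x Sx)) as [a [Hax Ua]].
    exists (fun y => way_below le a y). split; [exists a; auto|exact Hax]. }
  destruct (list_choice (fun W a => U a /\ W = (fun y => way_below le a y)) l Hl1)
    as [la [H1 H2]].
  exists la. split; [|split].
  - destruct (Hl2 s0 Ss0) as [W [HW _]]. destruct (H2 W HW) as [a [Ha _]].
    destruct la; [destruct Ha|discriminate].
  - intros x Sx. destruct (Hl2 x Sx) as [W [HW Wx]].
    destruct (H2 W HW) as [a [Ha [_ ->]]].
    exists (fun y => way_below le a y). split; [apply wb_open|split; [|exact Wx]].
    intros y Hy. exists a. split; [exact Ha|apply wb_le, Hy].
  - intros y [a [Ha Hay]]. destruct (H1 a Ha) as [W [_ [Ua _]]].
    apply (scott_up U a y); auto.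
Qed.
End DC.

Definition Sset {Y : Type} (mu : Y -> R) (Q : {y : Y | mu y = 0} -> Prop) : Y -> Prop :=
  fun y => exists x : {y : Y | mu y = 0}, proj1_sig x = y /\ Q x.

Section MAIN.
Context {Y : Type} (OY : (Y -> Prop) -> Prop) (Ht : is_topology OY)
  (mu : Y -> R) (Hmu01 : forall y, 0 <= mu y <= 1)
  (Hmuopen : forall a, 0 <= a <= 1 -> OY (fun y => mu y < a)).

Lemma lc_builder (S : Y -> Prop) : locally_compact OY -> compactset OY S -> nonempty S ->
  forall U, OY U -> subset S U ->
  exists K, (nonempty K /\ compactset OY K /\ saturated OY K /\ subset S (tinterior OY K))
            /\ subset K U.
Proof.
  intros Hlc HS [s0 Ss0] U HU HSU.
  destruct (HS (fun V => OY V /\ exists K, subset V K /\ subset K U /\ compactset OY K))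
    as [l [Hl1 Hl2]].
  { intros V [H _]. exact H. }
  { intros x Sx. destruct (Hlc x U HU (HSU x Sx)) as [V [K [HV [Vx [VK [KU cK]]]]]].
    exists V. split; [split; [exact HV|exists K; auto]|exact Vx]. }
  destruct (list_choice (fun V K => subset V K /\ subset K U /\ compactset OY K) l)
    as [lK [H1 H2]].
  { intros V HV. destruct (Hl1 V HV) as [_ H]. exact H. }
  set (K0 := fun y => exists K, In K lK /\ K y).
  exists (fun y => exists x, K0 x /\ spec_le OY x y). split; [split; [|split; [|split]]|].
  - destruct (Hl2 s0 Ss0) as [V [HV Vs]]. destruct (H2 V HV) as [K [HK [VK _]]].
    exists s0. exists s0. split; [exists K; split; [exact HK|apply VK, Vs]|].
    intros W _ H; exact H.
  - apply compact_up. apply compact_union_list. intros K HK.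
    destruct (H1 K HK) as [V [_ [_ [_ cK]]]]. exact cK.
  - intros x y [z [Kz Hzx]] Hxy. exists z. split; [exact Kz|]. eapply spec_trans; eauto.
  - intros x Sx. destruct (Hl2 x Sx) as [V [HV Vx]].
    destruct (H2 V HV) as [K [HK [VK _]]].
    exists V. split; [apply (Hl1 V HV)|split; [|exact Vx]].
    intros y Vy. exists y. split; [exists K; split; [exact HK|apply VK, Vy]|].
    intros W _ H; exact H.
  - intros y [x [[K [HK Kx]] Hxy]]. destruct (H1 K HK) as [V [_ [_ [KU _]]]].
    apply (Hxy U HU). apply KU, Kx.
Qed.

Lemma S_props (Q : {y : Y | mu y = 0} -> Prop) :
  nonempty Q -> compactset (subspace_top OY (fun y => mu y = 0)) Q ->
  saturated (subspace_top OY (fun y => mu y = 0)) Q ->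
  nonempty (Sset mu Q) /\ compactset OY (Sset mu Q) /\ saturated OY (Sset mu Q) /\
  (forall y, Sset mu Q y -> mu y = 0).
Proof.
  intros [x0 Qx0] HQc HQs. split; [|split; [|split]].
  - exists (proj1_sig x0). exists x0. auto.
  - intros F HF Hc.
    destruct (HQc (fun W => exists U, F U /\ forall x, W x <-> U (proj1_sig x))) as [l [Hl1 Hl2]].
    { intros W [U [FU HWU]]. exists U. split; [apply HF, FU|exact HWU]. }
    { intros x Qx. destruct (Hc (proj1_sig x) (ex_intro _ x (conj Logic.eq_refl Qx))) as [U [FU Ux]].
      exists (fun z => U (proj1_sig z)). split; [exists U; split; [exact FU|tauto]|exact Ux]. }
    destruct (list_choice (fun W U => F U /\ forall x, W x <-> U (proj1_sig x)) l) as [lU [A1 A2]].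
    { intros W HW. apply (Hl1 W HW). }
    exists lU. split.
    + intros U HU. destruct (A1 U HU) as [W [_ [FU _]]]. exact FU.
    + intros y [x [<- Qx]]. destruct (Hl2 x Qx) as [W [HW Wx]].
      destruct (A2 W HW) as [U [HU [_ HWU]]]. exists U. split; [exact HU|apply HWU, Wx].
  - intros y z [x [<- Qx]] Hyz.
    assert (Hz : mu z = 0).
    { apply Rle_antisym; [|apply Hmu01]. apply Rnot_lt_le. intros Hp.
      assert (He : 0 < Rmin (mu z) 1) by (apply Rmin_pos; lra).
      assert (H := Hyz (fun y => mu y < Rmin (mu z) 1) (mu_open OY Ht mu Hmu01 Hmuopen _)).
      simpl in H. rewrite (proj2_sig x) in H. specialize (H He).
      assert (Rmin (mu z) 1 <= mu z) by apply Rmin_l. lra. }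
    exists (exist _ z Hz). split; [reflexivity|].
    apply (HQs x (exist _ z Hz) Qx). intros W [U [HU HWU]] Wx.
    apply HWU. simpl. apply (Hyz U HU). apply HWU, Wx.
  - intros y [x [<- _]]. apply (proj2_sig x).
Qed.
End MAIN.

Theorem theorem17p3
  (Y : Type) (OY : (Y -> Prop) -> Prop)
  (HtopY : is_topology OY) (Hsober : sober OY) (Hlc : locally_compact OY)
  (mu : Y -> R) (Hmu01 : forall y, 0 <= mu y <= 1)
  (Hmuopen : forall a, 0 <= a <= 1 -> OY (fun y => mu y < a)) :
  let X := {y : Y | mu y = 0} in
  let OX := subspace_top OY (fun y => mu y = 0) in
  (* the maximum r(Q) exists *)
  (forall Q : Y -> Prop, nonempty Q -> compactset OY Q -> saturated OY Q ->
     is_max_on mu Q (rmax mu Q)) /\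
  (* (a) *)
  (forall (I : Type) (Q : I -> Y -> Prop),
     filtered Q ->
     (forall i, nonempty (Q i) /\ compactset OY (Q i) /\ saturated OY (Q i)) ->
     is_inf_fam (fun i => rmax mu (Q i)) 0 ->
     (forall y, (forall i, Q i y) -> mu y = 0) /\
     nonempty (fun x : X => forall i, Q i (proj1_sig x)) /\
     compactset OX (fun x : X => forall i, Q i (proj1_sig x)) /\
     saturated OX (fun x : X => forall i, Q i (proj1_sig x))) /\
  (* (b) *)
  (forall Q : X -> Prop, nonempty Q -> compactset OX Q -> saturated OX Q ->
     exists (I : Type) (Qi : I -> Y -> Prop),
       filtered Qi /\
       (forall i, nonempty (Qi i) /\ compactset OY (Qi i) /\ saturated OY (Qi i)) /\
       is_inf_fam (fun i => rmax mu (Qi i)) 0 /\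
       (forall y, (forall i, Qi i y) <-> exists x : X, proj1_sig x = y /\ Q x) /\
       (forall y, (forall i, tinterior OY (Qi i) y) <->
                  exists x : X, proj1_sig x = y /\ Q x)) /\
  (* (b), continuous dcpo case *)
  (forall le : Y -> Y -> Prop, continuous_dcpo le ->
     (forall U, OY U <-> scott_open le U) ->
     forall Q : X -> Prop, nonempty Q -> compactset OX Q -> saturated OX Q ->
     exists (I : Type) (Qi : I -> Y -> Prop) (Ai : I -> list Y),
       filtered Qi /\
       (forall i, nonempty (Qi i) /\ compactset OY (Qi i) /\ saturated OY (Qi i)) /\
       (forall i, Ai i <> nil /\ forall y, Qi i y <-> upset le (Ai i) y) /\
       is_inf_fam (fun i => rmax mu (Qi i)) 0 /\
       (forall y, (forall i, Qi i y) <-> exists x : X, proj1_sig x = y /\ Q x) /\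
       (forall y, (forall i, tinterior OY (Qi i) y) <->
                  exists x : X, proj1_sig x = y /\ Q x)).
Proof.
  intros X OX. subst X OX.
  split; [|split; [|split]].
  - intros Q Hne Hc _. apply (rmax_spec OY HtopY mu Hmu01 Hmuopen); auto.
  - intros I Q Hfil HQ Hinf.
    assert (H0 : forall y, (forall i, Q i y) -> mu y = 0).
    { intros y Hy. destruct (Hmu01 y) as [Hy0 _]. apply NNPP. intros Hne.
      assert (Hp : mu y > 0) by lra.
      destruct (proj2 Hinf (mu y) Hp) as [i Hi].
      destruct (rmax_spec OY HtopY mu Hmu01 Hmuopen (Q i)) as [_ Hm]; try apply HQ.
      specialize (Hm y (Hy i)). simpl in Hi. lra. }
    assert (Hwf := well_filtered OY HtopY Hsober I Q Hfil
                    (fun i => conj (proj1 (proj2 (HQ i))) (proj2 (proj2 (HQ i))))).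
    split; [exact H0|split; [|split]].
    + apply NNPP. intros Hn.
      destruct (Hwf (fun _ => False)) as [i Hi].
      { apply open_empty; auto. }
      { intros y Hy. apply Hn. exists (exist _ y (H0 y Hy)). exact Hy. }
      destruct (proj1 (HQ i)) as [z Qz]. exact (Hi z Qz).
    + intros F HF Hc.
      set (G := fun U => OY U /\ exists W, F W /\
                   forall x : {y : Y | mu y = 0}, W x <-> U (proj1_sig x)).
      assert (HGc : forall y, (forall i, Q i y) -> exists U, G U /\ U y).
      { intros y Hy. destruct (Hc (exist _ y (H0 y Hy)) Hy) as [W [FW Wx]].
        destruct (HF W FW) as [U [HU HWU]]. exists U. split.
        - split; [exact HU|exists W; auto].
        - apply (HWU (exist _ y (H0 y Hy))). exact Wx. }
      destruct (Hwf (fun y => exists U, G U /\ U y)) as [i Hi].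
      { apply open_union; auto. intros U [HU _]. exact HU. }
      { intros y Hy. apply HGc, Hy. }
      destruct (proj1 (proj2 (HQ i)) G) as [l [Hl1 Hl2]].
      { intros U [HU _]. exact HU. }
      { intros y Qy. apply Hi. exact Qy. }
      destruct (list_choice (fun U W => F W /\ forall x, W x <-> U (proj1_sig x)) l)
        as [lW [A1 A2]].
      { intros U HU. destruct (Hl1 U HU) as [_ [W HW]]. exists W. exact HW. }
      exists lW. split.
      * intros W HW. destruct (A1 W HW) as [U [_ [FW _]]]. exact FW.
      * intros x Hx. destruct (Hl2 (proj1_sig x) (Hx i)) as [U [HU Ux]].
        destruct (A2 U HU) as [W [HW [_ HWU]]]. exists W. split; [exact HW|apply HWU, Ux].
    + intros x y Hx Hxy i.
      apply (proj2 (proj2 (HQ i)) (proj1_sig x) (proj1_sig y) (Hx i)).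
      intros U HU Ux. apply (Hxy (fun z => U (proj1_sig z))); [|exact Ux].
      exists U. split; [exact HU|tauto].
  - intros Q Hne Hc Hs.
    destruct (S_props OY HtopY mu Hmu01 Hmuopen Q Hne Hc Hs) as [Sne [Sc [Ss Sm]]].
    set (S := Sset mu Q) in *.
    set (P := fun K => nonempty K /\ compactset OY K /\ saturated OY K /\
                             subset S (tinterior OY K)).
    exists {K : Y -> Prop | P K}.
    exists (fun i : {K : Y -> Prop | P K} => proj1_sig i).
    destruct (gen_b OY HtopY mu Hmu01 Hmuopen _ (fun i : {K : Y -> Prop | P K} => proj1_sig i) S) as [G1 [G2 [G3 G4]]].
    + intros i. destruct (proj2_sig i) as [a [b [c _]]]. auto.
    + intros i. destruct (proj2_sig i) as [_ [_ [_ d]]]. exact d.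
    + intros U HU HSU. destruct (lc_builder OY S Hlc Sc Sne U HU HSU) as [K [HK HKU]].
      exists (exist _ K HK). exact HKU.
    + exact Ss.
    + exact Sm.
    + split; [exact G1|split; [|split; [exact G2|split; [exact G3|exact G4]]]].
      intros i. destruct (proj2_sig i) as [a [b [c _]]]. auto.
  - intros le Hcd Hsc Q Hne Hc Hs.
    destruct (S_props OY HtopY mu Hmu01 Hmuopen Q Hne Hc Hs) as [Sne [Sc [Ss Sm]]].
    set (S := Sset mu Q) in *.
    set (P := fun A : list Y => A <> nil /\ subset S (tinterior OY (upset le A))).
    exists {A : list Y | P A}.
    exists (fun i : {A : list Y | P A} => upset le (proj1_sig i)).
    exists (fun i : {A : list Y | P A} => proj1_sig i).
    assert (HQi : forall i : {A : list Y | P A},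
               nonempty (upset le (proj1_sig i)) /\ compactset OY (upset le (proj1_sig i)) /\
               saturated OY (upset le (proj1_sig i))).
    { intros i. split; [apply upset_nonempty; auto; apply (proj1 (proj2_sig i))|split].
      - apply (upset_compact OY le Hcd Hsc).
      - apply (upset_sat OY le Hcd Hsc). }
    destruct (gen_b OY HtopY mu Hmu01 Hmuopen _ (fun i : {A : list Y | P A} => upset le (proj1_sig i)) S)
      as [G1 [G2 [G3 G4]]].
    + exact HQi.
    + intros i. apply (proj2 (proj2_sig i)).
    + intros U HU HSU.
      destruct (dcpo_builder OY le Hcd Hsc S Sc Sne U HU HSU) as [A [HA1 [HA2 HA3]]].
      exists (exist _ A (conj HA1 HA2)). exact HA3.
    + exact Ss.
    + exact Sm.
    + split; [exact G1|split; [exact HQi|split; [|split; [exact G2|split; [exact G3|exact G4]]]]].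
      intros i. split; [apply (proj1 (proj2_sig i))|intros y; tauto].
Qed.
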